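(* Let $0\le s<n$ and $A\in M_{s+1,n-s}$. There is a constant $K>0$ depending only on $A$ (and $n$) such that for every $1\le j\le n$ and every $w\in\mathcal S_{n+1,j}$ with $\|R_Ac(w)\|<1$ one has $\|w\|\le K\big(1+\|\pi_\bullet(w)\|\big)$.
   Context: $V=\mathbb R^{n+1}$ with basis $e_0,\dots,e_n$, $V_0=\mathrm{span}(e_1,\dots,e_n)$, $V_\bullet=\mathrm{span}(e_{s+1},\dots,e_n)$; $e_I=e_{i_1}\wedge\dots\wedge e_{i_j}$ for $I=\{i_1<\dots<i_j\}$; $\bigwedge(V)$ carries the inner product making $\{e_I\}$ orthonormal. $\mathcal S_{n+1,j}$ is the set of $w=v_1\wedge\dots\wedge v_j$ with $v_1,\dots,v_j\in\mathbb Z^{n+1}$ linearly independent. $\pi_\bullet$ is the orthogonal projection $\bigwedge^j(V)\to\bigwedge^j(V_\bullet)$. $c(w)_i=\sum_{J\subset\{1,\dots,n\},\#J=j-1}\langle e_i\wedge e_J,w\rangle e_J$. Index the columns of $A$ by $s+1,\dots,n$ and its rows by $0,\dots,s$; $R_A=(I_{s+1}\ A)\in M_{s+1,n+1}$, so $R_Ac(w)\in(\bigwedge^{j-1}V_0)^{s+1}$ has $i$-th component $c(w)_i+\sum_{k=s+1}^n a_{i,k}c(w)_k=\sum_J\langle(e_i+a_i)\wedge e_J,w\rangle e_J$, where $a_i=\sum_{k=s+1}^na_{i,k}e_k$; norms are Euclidean. *)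

(* Defs.v *)
From HB Require Import structures.
From mathcomp Require Import all_boot all_order all_algebra.
From mathcomp Require Import reals.
Set Implicit Arguments. Unset Strict Implicit. Unset Printing Implicit Defensive.
Import Order.TTheory GRing.Theory Num.Theory.
Local Open Scope ring_scope.

(* A family of j vectors in V = R^{n+1} is stored as the rows of a j x (n+1) matrix. *)

Definition intmx (R : realType) (j m : nat) (v : 'M[int]_(j, m)) : 'M[R]_(j, m) :=
  map_mx (fun z : int => z%:~R) v.

(* induced inner product on decomposable j-vectors:
   < u_1 /\ ... /\ u_j , w_1 /\ ... /\ w_j > = det ( <u_a, w_b> )_{a,b} *)
Definition wip (R : realType) (j m : nat) (U W : 'M[R]_(j, m)) : R :=
  \det (U *m W^T).

(* rows e_{i_1}, ..., e_{i_j} for I = {i_1 < ... < i_j} (enum of a set of ordinals is increasing) *)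
Definition erows (R : realType) (j n : nat) (I : {set 'I_n.+1}) : 'M[R]_(j, n.+1) :=
  \matrix_(a < j, k < n.+1) ((k == nth ord0 (enum I) a)%:R).

(* Plücker coordinate <e_I, w> of w = w_1 /\ ... /\ w_j *)
Definition plucker (R : realType) (j n : nat) (W : 'M[R]_(j, n.+1)) (I : {set 'I_n.+1}) : R :=
  wip (erows R j I) W.

(* ||w|| for the inner product making {e_I} orthonormal *)
Definition wnorm (R : realType) (j n : nat) (W : 'M[R]_(j, n.+1)) : R :=
  Num.sqrt (\sum_(I : {set 'I_n.+1} | #|I| == j) plucker W I ^+ 2).

(* ||pi_bullet(w)||, V_bullet = span(e_{s+1},...,e_n) *)
Definition pinorm (R : realType) (j n : nat) (s : nat) (W : 'M[R]_(j, n.+1)) : R :=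
  Num.sqrt (\sum_(I : {set 'I_n.+1} | (#|I| == j) && [forall k in I, (s < k)%N])
              plucker W I ^+ 2).

(* e_i + a_i, a_i = sum_{k=s+1}^n a_{i,k} e_k ; column k of A (k = s+1..n) is A i (k-s-1) *)
Definition avec (R : realType) (n s : nat) (A : 'M[R]_(s.+1, n - s)) (i : 'I_s.+1)
  : 'rV[R]_(n.+1) :=
  \row_(k < n.+1) (((k : nat) == i)%:R
                   + \sum_(l < n - s) (((k : nat) == s.+1 + l)%N)%:R * A i l).

(* rows e_i + a_i, e_{J_1}, ..., e_{J_{j-1}} for J = {J_1 < ... < J_{j-1}} *)
Definition crow (R : realType) (j n s : nat) (A : 'M[R]_(s.+1, n - s)) (i : 'I_s.+1)
  (J : {set 'I_n.+1}) : 'M[R]_(j, n.+1) :=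
  \matrix_(a < j, k < n.+1)
    (if (a : nat) == 0%N then avec A i 0 k else ((k == nth ord0 (enum J) a.-1)%:R)).

(* ||R_A c(w)||: i-th component is sum_J <(e_i + a_i) /\ e_J, w> e_J,
   J ranging over (j-1)-subsets of {1,...,n} *)
Definition RAc_norm (R : realType) (j n s : nat) (A : 'M[R]_(s.+1, n - s))
  (W : 'M[R]_(j, n.+1)) : R :=
  Num.sqrt (\sum_(i < s.+1)
             \sum_(J : {set 'I_n.+1} | (#|J| == j.-1) && (ord0 \notin J))
               wip (crow j A i J) W ^+ 2).

(* Main.v *)
Require Import Defs.
From HB Require Import structures.
From mathcomp Require Import all_boot all_order all_algebra all_fingroup.
From mathcomp Require Import reals.
From mathcomp Require Import lra zify.
Set Implicit Arguments. Unset Strict Implicit. Unset Printing Implicit Defensive.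
Import Order.TTheory GRing.Theory Num.Theory.
Local Open Scope ring_scope.

Definition Et (R : realType) (j n : nat) (t : 'I_j -> 'I_n.+1) : 'M[R]_(j, n.+1) :=
  \matrix_(a < j, k < n.+1) ((k == t a)%:R).

Lemma L1 (R : realType) (j n : nat) (t : 'I_j -> 'I_n.+1) (I : {set 'I_n.+1})
  (W : 'M[R]_(j, n.+1)) :
  injective t -> #|I| = j -> (forall a, t a \in I) ->
  `|wip (Et R t) W| = `|plucker W I|.
Proof.
move=> tinj hI tI.
have hs a : (index (t a) (enum I) < j)%N by rewrite -hI cardE index_mem mem_enum.
pose f a := Ordinal (hs a).
have finj : injective f.
  move=> a b /(congr1 val) /= e; apply: tinj.
  rewrite -(nth_index ord0 (_ : t a \in enum I)) ?mem_enum // e nth_index // mem_enum //.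
have E : Et R t = row_perm (perm finj) (erows R j I).
  apply/matrixP=> a k; rewrite !mxE permE /= nth_index // mem_enum //.
rewrite /plucker /wip E row_permE -mulmxA det_mulmx det_perm normrM normrX normrN1.
by rewrite expr1n mul1r.
Qed.

Lemma L0 (R : realType) (j n : nat) (t : 'I_j -> 'I_n.+1) (W : 'M[R]_(j, n.+1))
  (a1 a2 : 'I_j) : a1 != a2 -> t a1 = t a2 -> wip (Et R t) W = 0.
Proof.
move=> ne e; rewrite /wip; apply: (determinant_alternate ne) => k.
by rewrite !mxE; apply: eq_bigr => m _; rewrite !mxE e.
Qed.

Definition rowset (R : realType) (j n : nat) (U : 'M[R]_(j.+1, n.+1)) (m : 'I_n.+1)
  : 'M[R]_(j.+1, n.+1) :=
  \matrix_(a < j.+1, k < n.+1) (if a == ord0 then (k == m)%:R else U a k).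

Lemma L2 (R : realType) (j n : nat) (U W : 'M[R]_(j.+1, n.+1)) :
  wip U W = \sum_m U ord0 m * wip (rowset U m) W.
Proof.
rewrite /wip (expand_det_row _ ord0).
have C m k : cofactor (rowset U m *m W^T) ord0 k = cofactor (U *m W^T) ord0 k.
  rewrite /cofactor; congr (_ * _); congr (\det _).
  apply/matrixP => a b; rewrite !mxE; apply: eq_bigr => c _; rewrite !mxE.
  by rewrite eq_sym (negPf (neq_lift _ _)).
under [RHS]eq_bigr => m _ do rewrite (expand_det_row _ ord0) big_distrr.
rewrite exchange_big /=; apply: eq_bigr => k _.
rewrite mxE big_distrl; apply: eq_bigr => m _.
rewrite C mulrA; congr (_ * _); congr (_ * _).
rewrite !mxE /rowset (bigD1 m) // big1 /=; first by rewrite !mxE eqxx /= eqxx mul1r addr0.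
by move=> c /negPf nc; rewrite !mxE eqxx nc mul0r.
Qed.

Lemma Lsel (R : realType) (n p : nat) (x : 'I_n.+1 -> R) : (p < n.+1)%N ->
  \sum_(m < n.+1) ((m : nat) == p)%:R * x m = x (inord p).
Proof.
move=> hp; rewrite (bigD1 (inord p)) //= inordK // eqxx mul1r big1 ?addr0 //.
move=> m hm; case: eqP => e; last by rewrite mul0r.
by move: hm; rewrite -e inord_val eqxx.
Qed.

Definition tm (j n : nat) (J : {set 'I_n.+1}) (m : 'I_n.+1) (a : 'I_j.+1) : 'I_n.+1 :=
  if a == ord0 then m else nth ord0 (enum J) a.-1.

Lemma L3 (R : realType) (j n s : nat) (hs : (s < n)%N) (A : 'M[R]_(s.+1, n - s))
  (i : 'I_s.+1) (J : {set 'I_n.+1}) (W : 'M[R]_(j.+1, n.+1)) :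
  wip (crow j.+1 A i J) W =
    wip (Et R (tm J (inord i))) W
    + \sum_(l < n - s) A i l * wip (Et R (tm J (inord (s.+1 + l)))) W.
Proof.
rewrite L2.
have E m : rowset (crow j.+1 A i J) m = Et R (tm J m).
  apply/matrixP => a k; rewrite /rowset /Et /crow /tm !mxE.
  case ha: (a == ord0). by [].
  have -> : ((a : nat) == 0%N) = false.
    by apply: contraFF ha => /eqP h; apply/eqP/val_inj.
  by [].
under eq_bigr => m _ do rewrite E.
under eq_bigr => m _ do rewrite /avec !mxE mulrDl mulr_suml.
have hi : (i < n.+1)%N by apply: (leq_trans (ltn_ord i)); rewrite ltnS ltnW.
have H2 : \sum_(m < n.+1) \sum_(l < n - s) ((m : nat) == (s.+1 + l)%N)%:R * A i l * wip (Et R (tm J m)) W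
   = \sum_(l < n - s) A i l * wip (Et R (tm J (inord (s.+1 + l)))) W.
  rewrite exchange_big; apply: eq_bigr => l _.
  under eq_bigr => m _ do rewrite mulrAC.
  rewrite -mulr_suml (Lsel (fun m => wip (Et R (tm J m)) W)); first by rewrite mulrC.
  by have := ltn_ord l; lia.
rewrite big_split; congr (_ + _); [exact: Lsel | exact: H2].
Qed.

Lemma Ltm (j n : nat) (J : {set 'I_n.+1}) (m : 'I_n.+1) :
  #|J| = j -> m \notin J ->
  injective (@tm j n J m) /\ (forall a, @tm j n J m a \in m |: J).
Proof.
move=> hJ mJ.
have hnth (a : 'I_j.+1) : a != ord0 -> (a.-1 < size (enum J))%N.
  move=> ha; rewrite -cardE hJ; have := ltn_ord a.
  have : (a : nat) != 0%N by apply: contra ha => /eqP h; apply/eqP/val_inj.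
  lia.
have inJ (a : 'I_j.+1) : a != ord0 -> nth ord0 (enum J) a.-1 \in J.
  by move=> ha; rewrite -mem_enum mem_nth // hnth.
split; last first.
  move=> a; rewrite /tm; case: ifP => [_|/negbT ha]; first by rewrite setU11.
  by rewrite setU1r // inJ.
move=> a b; rewrite /tm.
case: ifP => [/eqP -> | /negbT ha]; case: ifP => [/eqP -> | /negbT hb] //.
- by move=> e; move: mJ; rewrite e inJ.
- by move=> e; move: mJ; rewrite -e inJ.
move=> /eqP; rewrite nth_uniq ?hnth ?enum_uniq // => /eqP e.
apply/val_inj => /=.
have : (a : nat) != 0%N by apply: contra ha => /eqP h; apply/eqP/val_inj.
have : (b : nat) != 0%N by apply: contra hb => /eqP h; apply/eqP/val_inj.
lia.
Qed.

Lemma Ltm0 (R : realType) (j n : nat) (J : {set 'I_n.+1}) (m : 'I_n.+1) (W : 'M[R]_(j.+1, n.+1)) :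
  #|J| = j -> m \in J -> wip (Et R (@tm j n J m)) W = 0.
Proof.
move=> hJ mJ.
have hi : ((index m (enum J)).+1 < j.+1)%N by rewrite ltnS -hJ cardE index_mem mem_enum.
apply: (@L0 R j.+1 n (tm J m) W ord0 (Ordinal hi)).
  by apply/eqP => /(congr1 val).
by rewrite /tm /= nth_index // mem_enum.
Qed.

Lemma Lsq (R : realType) (x S : R) : 0 <= S -> x ^+ 2 <= S -> `|x| <= Num.sqrt S.
Proof. by move=> S0 h; rewrite -sqrtr_sqr ler_sqrt. Qed.

Lemma Lle (R : realType) (T : finType) (P : pred T) (F : T -> R) (x0 : T) :
  (forall x, 0 <= F x) -> P x0 -> F x0 <= \sum_(x | P x) F x.
Proof.
move=> F0 Px; rewrite (bigD1 x0) //= lerDl sumr_ge0 //.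
Qed.

Lemma Lfin (R : realType) (N Y : R) : 1 <= N -> N * Y ^+ 2 <= (N * Y) ^+ 2.
Proof.
move=> h; rewrite exprMn; apply: ler_wpM2r; first exact: sqr_ge0.
by rewrite expr2 ler_peMl // (le_trans ler01 h).
Qed.

Definition low (n s : nat) : {set 'I_n.+1} := [set k : 'I_n.+1 | ((k : nat) <= s)%N].

Lemma key (R : realType) (n s : nat) (hs : (s < n)%N) (A : 'M[R]_(s.+1, n - s))
  (j : nat) (W : 'M[R]_(j.+1, n.+1)) :
  RAc_norm A W < 1 ->
  forall d (I : {set 'I_n.+1}), #|I| = j.+1 -> (#|I :&: low n s| <= d)%N ->
  `|plucker W I| <= (1 + \sum_i \sum_l `|A i l|) ^+ d * (1 + pinorm s W).
Proof.
move=> hr.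
set B := 1 + _; set P := pinorm s W.
have S0 i : 0 <= \sum_l `|A i l| by apply: sumr_ge0.
have hB : 1 <= B by rewrite /B lerDl sumr_ge0.
have hP : 0 <= P by apply: sqrtr_ge0.
have base (I : {set 'I_n.+1}) : #|I| = j.+1 -> I :&: low n s = set0 -> `|plucker W I| <= P.
  move=> hI h0.
  apply: (@Lsq R _ (\sum_(I0 : {set 'I_n.+1} | (#|I0| == j.+1) && [forall k in I0, (s < k)%N]) plucker W I0 ^+ 2)).
    by apply: sumr_ge0 => ? _; apply: sqr_ge0.
  apply: (Lle (F := fun I => plucker W I ^+ 2) (fun _ => sqr_ge0 _)).
  rewrite hI eqxx /=; apply/forallP => k; apply/implyP => kI.
  rewrite ltnNge; apply/negP => ks.
  have : k \in I :&: low n s by rewrite !inE kI ks.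
  by rewrite h0 inE.
have crowb (i : 'I_s.+1) (J : {set 'I_n.+1}) : #|J| = j -> ord0 \notin J -> `|wip (crow j.+1 A i J) W| <= RAc_norm A W.
  move=> hJ oJ.
  apply: (@Lsq R _ (\sum_(i < s.+1) \sum_(J : {set 'I_n.+1} | (#|J| == j.+1.-1) && (ord0 \notin J))
               wip (crow j.+1 A i J) W ^+ 2)).
    by apply: sumr_ge0 => ? _; apply: sumr_ge0 => ? _; apply: sqr_ge0.
  have := @Lle R _ (fun _ => true) (fun i => \sum_(J : {set 'I_n.+1} | (#|J| == j.+1.-1) && (ord0 \notin J))
               wip (crow j.+1 A i J) W ^+ 2) i (fun _ => sumr_ge0 _ (fun _ _ => sqr_ge0 _)) isT.
  move=> h; apply: le_trans h.
  apply: (Lle (F := fun J => wip (crow j.+1 A i J) W ^+ 2) (fun _ => sqr_ge0 _)).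
  by rewrite hJ eqxx oJ.
elim=> [|d IH] I hI hd.
  rewrite expr0 mul1r; apply: le_trans (base I hI _) _; last by rewrite lerDr.
  by apply/eqP; rewrite -cards_eq0 -leqn0.
have hX : 1 + P <= B ^+ d * (1 + P) by apply: ler_peMl; [rewrite addr_ge0 | apply: exprn_ege1].
case h0: (I :&: low n s == set0).
  apply: le_trans (base I hI (eqP h0)) _.
  apply: le_trans (_ : 1 + P <= _); first by rewrite lerDr.
  by apply: ler_peMl; [rewrite addr_ge0 | apply: exprn_ege1].
have [i [iI is0 o0]] : exists i, [/\ i \in I, ((i : nat) <= s)%N & ord0 \notin I :\ i].
  case h: (ord0 \in I).
    by exists ord0; split => //; rewrite !inE eqxx.
  move/negbT/set0Pn: h0 => [i]; rewrite !inE => /andP[iI is0]; exists i; split => //.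
  by rewrite !inE h andbF.
set J := I :\ i.
have hJ : #|J| = j by move: hI; rewrite (cardsD1 i) iI add1n => -[].
pose i0 : 'I_s.+1 := Ordinal (is0 : (i < s.+1)%N).
have ei : inord i0 = i :> 'I_n.+1 by apply/val_inj; rewrite /= inordK.
have Ex := L3 hs A i0 J W; rewrite ei in Ex.
have hiJ : i \notin J by rewrite !inE eqxx.
have [tinj tin] := Ltm hJ hiJ.
have e1 : `|plucker W I| = `|wip (Et R (tm J i)) W|.
  by rewrite (L1 W tinj _ tin) // setD1K.
set X := B ^+ d * (1 + P).
have X0 : 0 <= X by rewrite mulr_ge0 ?addr_ge0 // exprn_ge0 // (le_trans ler01).
have hl (l : 'I_(n - s)) : `|wip (Et R (tm J (inord (s.+1 + l)))) W| <= X.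
  set k : 'I_n.+1 := inord (s.+1 + l).
  case kJ: (k \in J); first by rewrite Ltm0 // normr0.
  have [kinj kin] := Ltm hJ (negbT kJ).
  have hk : (s.+1 + l < n.+1)%N.
    by have := ltn_ord l; lia.
  rewrite (L1 W kinj _ kin); last by rewrite cardsU1 kJ hJ.
  apply: IH; first by rewrite cardsU1 kJ hJ.
  have sub : (k |: J) :&: low n s \subset (I :&: low n s) :\ i.
    apply/subsetP => x; rewrite !inE => /andP[/orP[/eqP->|/andP[xi xI]] xl].
      by move: xl; rewrite /k inordK // leqNgt ltnS leq_addr.
    by rewrite xi xI xl.
  apply: leq_trans (subset_leq_card sub) _.
  by move: hd; rewrite (cardsD1 i (I :&: low n s)) !inE iI is0.
rewrite e1.
have -> : wip (Et R (tm J i)) W = wip (crow j.+1 A i0 J) W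
   - \sum_(l < n - s) A i0 l * wip (Et R (tm J (inord (s.+1 + l)))) W.
  by rewrite Ex addrK.
apply: le_trans (ler_normB _ _) _.
have h1 : `|wip (crow j.+1 A i0 J) W| <= 1 by apply: ltW; apply: le_lt_trans (crowb _ _ hJ o0) hr.
have h2 : `|\sum_(l < n - s) A i0 l * wip (Et R (tm J (inord (s.+1 + l)))) W|
          <= (\sum_l `|A i0 l|) * X.
  apply: le_trans (ler_norm_sum _ _ _) _; rewrite mulr_suml; apply: ler_sum => l _.
  by rewrite normrM ler_wpM2l.
have h3 : \sum_l `|A i0 l| <= B - 1.
  rewrite /B (addrC 1) addrK; exact: (@Lle R _ (fun _ => true) (fun i => \sum_l `|A i l|) i0 S0 isT).
have h4 : 1 <= X by apply: le_trans hX; rewrite lerDl.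
rewrite exprS -mulrA -/X.
have h5 : (\sum_l `|A i0 l|) * X <= (B - 1) * X by rewrite ler_wpM2r.
rewrite mulrBl mul1r in h5.
lra.
Qed.

Unset Implicit Arguments.
Set Strict Implicit.

Theorem lemma5p1 (R : realType) (n s : nat) (hs : (s < n)%N)
  (A : 'M[R]_(s.+1, n - s)) :
  exists K : R, 0 < K /\
    forall (j : nat), (1 <= j <= n)%N ->
    forall v : 'M[int]_(j, n.+1),
      row_free (intmx R v) ->
      RAc_norm A (intmx R v) < 1 ->
      wnorm (intmx R v) <= K * (1 + pinorm s (intmx R v)).
Proof.
set B := 1 + \sum_i \sum_l `|A i l|.
set N : R := (#|{set 'I_n.+1}|)%:R.
have hB : 1 <= B by rewrite /B lerDl; apply: sumr_ge0 => i _; apply: sumr_ge0.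
have hN : 1 <= N.
  rewrite /N ler1n; apply/card_gt0P; by exists set0.
exists (N * B ^+ n.+1); split.
  by rewrite mulr_gt0 // ?(lt_le_trans ltr01) // exprn_ege1.
case=> [|j] // /andP[_ hj] v _ hr.
set W := intmx R v; set P := pinorm s W.
set X := B ^+ n.+1 * (1 + P).
have hP : 0 <= P by apply: sqrtr_ge0.
have X0 : 0 <= X by rewrite mulr_ge0 ?addr_ge0 // exprn_ge0 // (le_trans ler01).
have hw (I : {set 'I_n.+1}) : #|I| == j.+1 -> `|plucker W I| <= X.
  move=> /eqP hI; apply: (key hs hr) => //.
  by apply: leq_trans (max_card _) _; rewrite card_ord.
have hS : \sum_(I : {set 'I_n.+1} | #|I| == j.+1) plucker W I ^+ 2 <= N * X ^+ 2.
  apply: le_trans (_ : \sum_(I : {set 'I_n.+1}) X ^+ 2 <= _).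
    rewrite big_mkcond /=; apply: ler_sum => I _; case: ifP => h; last by apply: sqr_ge0.
    rewrite -(real_normK (num_real (plucker W I))) !expr2.
    by apply: ler_pM => //; apply: hw.
  by rewrite sumr_const /N mulr_natl.
rewrite /wnorm -/P -mulrA -/X.
apply: le_trans (_ : Num.sqrt ((N * X) ^+ 2) <= _); last first.
  by rewrite sqrtr_sqr ger0_norm // mulr_ge0 // (le_trans ler01).
rewrite ler_sqrt ?sqr_ge0 //.
apply: le_trans hS _.
exact: Lfin.
Qed.
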